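(* Let $G$ be a simple stochastic game and $A$ a subset of the arcs of $G$. A positional MAX strategy $\sigma$ is optimal in $G$ if and only if it is optimal in $G[A,\sigma]$.
   Context: A simple stochastic game (SSG) $G$ is a finite directed graph whose vertex set is partitioned into MAX vertices, MIN vertices, random vertices and a nonempty set of sinks; every non-sink vertex has at least one outgoing arc, every sink has exactly one outgoing arc, a self-loop; each random vertex $x$ carries a rational probability distribution $p_x$ on its out-neighbourhood, positive on every out-neighbour; each sink $s$ has rational value $\mathrm{Val}(s)\in[0,1]$. A positional MAX (resp. MIN) strategy assigns to each MAX (resp. MIN) vertex one of its out-neighbours. Under $\sigma,\tau$ from start $x_0$, the random play moves from MAX vertex $x$ to $\sigma(x)$, from MIN vertex $x$ to $\tau(x)$, from random vertex $x$ to an out-neighbour drawn by $p_x$ independently, and stays at a sink once reached; its value is $\mathrm{Val}(s)$ if it reaches sink $s$, else $0$, and $v^G_{\sigma,\tau}(x_0)$ is its expectation. A best response to $\sigma$ is a positional MIN strategy $\tau$ with $v_{\sigma,\tau}\le v_{\sigma,\tau'}$ pointwise for all MIN strategies $\tau'$ (one exists), and $v^G_\sigma:=v^G_{\sigma,\tau}$ for such $\tau$. A positional MAX strategy $\sigma$ is optimal in $G$ if $v^G_\sigma\ge v^G_{\sigma''}$ pointwise for every positional MAX strategy $\sigma''$. Transformed game: for a set $A$ of arcs of $G$, $G[A,\sigma]$ is obtained from a copy of $G$ by replacing each arc $e=(x,y)\in A$ by an arc $(x,s_e)$ to a new sink $s_e$ of value $v^G_\sigma(y)$ (for random $x$, $p_x(s_e)=p_x(y)$);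 $y$ is kept. Strategies of $G$ and $G[A,\sigma]$ are identified (a MAX vertex $x$ with $\sigma(x)=y$, $(x,y)\in A$, moves to $s_{(x,y)}$). *)

(* Defs.v *)
From HB Require Import structures.
From mathcomp Require Import all_boot all_order all_algebra.
From mathcomp Require Import all_classical all_reals all_analysis.
Set Implicit Arguments. Unset Strict Implicit. Unset Printing Implicit Defensive.
Import Order.TTheory GRing.Theory Num.Theory numFieldNormedType.Exports.
Local Open Scope ring_scope.

Inductive vkind := Max | Min | Rand | Sink.

(* A simple stochastic game (raw data; well-formedness is [ssg_wf]).
   [garc] is the arc relation, [prob x y] the probability p_x(y) at random
   vertices, [sinkval s] the value Val(s) of a sink s. *)
Record ssg (R : realType) := SSG {
  vert : finType;
  kind : vert -> vkind;
  garc : rel vert;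
  prob : vert -> vert -> R;
  sinkval : vert -> R }.

Section Game.
Variables (R : realType) (G : ssg R).
Local Notation V := (vert G).

Definition is_rat (r : R) := exists q : rat, r = ratr q.

Definition ssg_wf : Prop :=
  [/\ (exists s : V, kind s = Sink),
      (forall x : V, kind x <> Sink -> exists y, garc x y),
      (forall x : V, kind x = Sink -> forall y, garc x y <-> y = x),
      (forall x : V, kind x = Rand ->
          (forall y, garc x y -> 0 < prob x y) /\
          (forall y, ~~ garc x y -> prob x y = 0) /\
          \sum_(y : V) prob x y = 1) &
      (forall s : V, kind s = Sink -> 0 <= sinkval s <= 1)].

Definition ssg_rational : Prop :=
  (forall x y : V, is_rat (prob x y)) /\ (forall s : V, is_rat (sinkval s)).

(* positional strategies: a choice of out-neighbour at each MAX (resp. MIN)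
   vertex; the values at other vertices are irrelevant. *)
Definition strategy := {ffun V -> V}.

Definition valid_max (sigma : strategy) : bool :=
  [forall x, if kind x is Max then garc x (sigma x) else true].
Definition valid_min (tau : strategy) : bool :=
  [forall x, if kind x is Min then garc x (tau x) else true].

Definition trans (sigma tau : strategy) (x y : V) : R :=
  match kind x with
  | Max => (sigma x == y)%:R
  | Min => (tau x == y)%:R
  | Rand => prob x y
  | Sink => (x == y)%:R
  end.

Definition step (sigma tau : strategy) (f : V -> R) : V -> R :=
  fun x => \sum_(y : V) trans sigma tau x y * f y.

Definition payoff (y : V) : R := if kind y is Sink then sinkval y else 0.

(* expected value of Val(X_n) * [X_n is a sink] after n steps from x *)
Definition nstep_value (sigma tau : strategy) (n : nat) (x : V) : R :=
  iter n (step sigma tau) payoff x.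

(* v_{sigma,tau}(x): as sinks are absorbing, P(reach s) = lim_n P(X_n = s),
   so the expected play value is the limit of the n-step values. *)
Definition value (sigma tau : strategy) (x : V) : R :=
  limn (fun n => nstep_value sigma tau n x).

Definition best_response (sigma tau : strategy) : bool :=
  valid_min tau &&
  [forall tau' : strategy, valid_min tau' ==>
     [forall x, value sigma tau x <= value sigma tau' x]].

(* v_sigma := v_{sigma,tau} for a best response tau (one exists) *)
Definition vsig (sigma : strategy) (x : V) : R :=
  if [pick tau | best_response sigma tau] is Some tau then value sigma tau x
  else 0.

Definition optimal (sigma : strategy) : Prop :=
  forall sigma'' : strategy, valid_max sigma'' ->
    forall x, vsig sigma'' x <= vsig sigma x.

End Game.

Section Transform.
Variables (R : realType) (G : ssg R) (A : {set vert G * vert G})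
          (sigma : strategy G).
Local Notation V := (vert G).

Definition tvert : finType := (V + {e : V * V | e \in A})%type.

Definition tkind (x : tvert) : vkind :=
  match x with inl x => kind x | inr _ => Sink end.

Definition tarc (x y : tvert) : bool :=
  match x, y with
  | inl x, inl y => garc x y && ((x, y) \notin A)
  | inl x, inr e => (sval e).1 == x
  | inr e, inr e' => e == e'
  | inr _, inl _ => false
  end.

Definition tprob (x y : tvert) : R :=
  match x, y with
  | inl x, inl y => if (x, y) \in A then 0 else prob x y
  | inl x, inr e => if (sval e).1 == x then prob x (sval e).2 else 0
  | _, _ => 0
  end.

Definition tsval (x : tvert) : R :=
  match x with inl x => sinkval x | inr e => vsig sigma (sval e).2 end.

Definition transform : ssg R := @SSG R tvert tkind tarc tprob tsval.

Definition lift_strategy (s : strategy G) : strategy transform :=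
  [ffun x : tvert =>
     match x with
     | inl x => if insub (x, s x) is Some e then inr e else inl (s x)
     | inr e => inr e
     end].

End Transform.

(* Main.v *)
Require Import Defs.
From HB Require Import structures.
From mathcomp Require Import all_boot all_order all_algebra.
From mathcomp Require Import all_classical all_reals all_analysis.
From mathcomp Require Import ring lra.
Set Implicit Arguments. Unset Strict Implicit. Unset Printing Implicit Defensive.
Import Order.TTheory GRing.Theory Num.Theory numFieldNormedType.Exports.
Local Open Scope ring_scope.
Local Open Scope classical_set_scope.

Section AffS.
Variables (R : realType) (V : finType) (M : V -> V -> R) (b : V -> R).
Hypothesis M0 : forall z y, 0 <= M z y.
Definition aff (f : V -> R) : V -> R := fun z => b z + \sum_y M z y * f y.
Definition lef (f g : V -> R) := forall z, f z <= g z.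

Lemma aff_mono f g : lef f g -> lef (aff f) (aff g).
Proof.
move=> fg z; rewrite /aff lerD2l; apply: ler_sum => y _.
by apply: ler_wpM2l.
Qed.

Variables (p g0 : V -> R).
Hypotheses (pp : lef p (aff p)) (pg0 : lef p g0) (g0p : lef (aff g0) g0).

Definition sq n := iter n aff p.

Lemma sq_incr n : lef (sq n) (sq n.+1).
Proof. elim: n => [|n IH] //=; exact: aff_mono. Qed.

Lemma sq_le g n : lef p g -> lef (aff g) g -> lef (sq n) g.
Proof.
move=> pg gg; elim: n => [|n IH] //= z.
exact: le_trans (aff_mono IH z) (gg z).
Qed.

Lemma sq_nd z : nondecreasing_seq (fun n => sq n z).
Proof. by apply/nondecreasing_seqP => n; apply: sq_incr. Qed.

Lemma sq_cvg z : cvgn (fun n => sq n z).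
Proof.
apply: nondecreasing_is_cvgn; first exact: sq_nd.
exists (g0 z) => _ [n _ <-]; exact: sq_le.
Qed.

Definition L z := limn (fun n => sq n z).

Lemma L_ge n : lef (sq n) L.
Proof. move=> z; apply: nondecreasing_cvgn_le; [exact: sq_nd|exact: sq_cvg]. Qed.

Lemma L_le g : lef p g -> lef (aff g) g -> lef L g.
Proof.
move=> pg gg z; apply: limr_le; first exact: sq_cvg.
by apply: nearW => n; apply: sq_le.
Qed.

Lemma aff_cvg z : (fun n => aff (sq n) z) @ \oo --> aff L z.
Proof.
rewrite /aff; apply: cvgD; first exact: cvg_cst.
apply: cvg_big; first exact: add_continuous.
move=> y _; apply: cvgMl_tmp. exact: sq_cvg.
Qed.

Lemma L_fix z : aff L z = L z.
Proof.
apply/eqP; rewrite eq_le; apply/andP; split.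
- have H := @aff_cvg z.
  apply: (cvgr_to_le H).
  apply: nearW => n; exact: (L_ge n.+1).
- apply: limr_le; first exact: sq_cvg.
  apply: nearW => n; apply: le_trans (sq_incr n z) _.
  exact: aff_mono (L_ge n) z.
Qed.

Lemma L_gep : lef p L.
Proof. exact: (L_ge 0). Qed.

End AffS.

Lemma final_ineq (R : realType) (k h m W u : R) : 0 <= k -> 0 <= h ->
  u <= k + m * h -> k + W * h <= W -> k + 1 * h <= 1 -> 0 <= m -> 0 <= W ->
  W <= m -> m < u -> False.
Proof.
move=> k0 h0 uk wk ok m0 W0 Wm mu.
have h1 : h <= 1 by lra.
have : 0 <= (m - W) * (1 - h) by apply: mulr_ge0; lra.
nra.
Qed.

Section GameTh.
Variables (R : realType) (H : ssg R).
Local Notation V := (vert H).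
Local Notation payoff := (@payoff R H).
Definition good := [/\ (forall s : V, kind s = Sink -> 0 <= sinkval s <= 1),
  (forall x : V, kind x = Rand -> (forall y, 0 <= prob x y) /\ \sum_y prob x y = 1) &
  (forall x : V, kind x = Min -> exists y, garc x y)].
Hypothesis Hg : good.
Lemma Hsink : forall s : V, kind s = Sink -> 0 <= sinkval s <= 1.
Proof. by case: Hg. Qed.
Lemma Hrand : forall x : V, kind x = Rand ->
  (forall y, 0 <= prob x y) /\ \sum_y prob x y = 1.
Proof. by case: Hg. Qed.
Lemma Hmin : forall x : V, kind x = Min -> exists y, garc x y.
Proof. by case: Hg. Qed.

Lemma sum_delta (a : V) (g : V -> R) : \sum_y (a == y)%:R * g y = g a.
Proof.
rewrite (bigD1 a) //= eqxx mul1r big1 ?addr0 // => y ya.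
by rewrite eq_sym (negbTE ya) mul0r.
Qed.

Lemma trans_sumE (s t : strategy H) x g :
  \sum_y trans s t x y * g y = match kind x with
    | Max => g (s x) | Min => g (t x)
    | Rand => \sum_y prob x y * g y | Sink => g x end.
Proof. by rewrite /trans; case: (kind x) => //; exact: sum_delta. Qed.

Lemma trans_ge0 (s t : strategy H) x y : 0 <= trans s t x y.
Proof. by rewrite /trans; case E: (kind x) => //; exact: (Hrand E).1. Qed.

Lemma trans_sum1 (s t : strategy H) x : \sum_y trans s t x y = 1.
Proof.
have := trans_sumE s t x (fun _ => 1).
under eq_bigr do rewrite mulr1; move=> ->.
case E: (kind x) => //; under eq_bigr do rewrite mulr1; exact: (Hrand E).2.
Qed.

Lemma payoff_ge0 (y : V) : 0 <= payoff y.
Proof. by rewrite /payoff; case E: (kind y) => //; case/andP: (Hsink E). Qed.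

Lemma payoff_le1 (y : V) : payoff y <= 1.
Proof. by rewrite /payoff; case E: (kind y) => //; case/andP: (Hsink E). Qed.

Lemma sumP_ge0 (s t : strategy H) x (g : V -> R) :
  (forall y, 0 <= g y) -> 0 <= \sum_y trans s t x y * g y.
Proof. by move=> g0; apply: sumr_ge0 => y _; apply: mulr_ge0 => //; exact: trans_ge0. Qed.

Lemma sumP_le (s t : strategy H) x (g g' : V -> R) :
  (forall y, g y <= g' y) -> \sum_y trans s t x y * g y <= \sum_y trans s t x y * g' y.
Proof. by move=> gg; apply: ler_sum => y _; apply: ler_wpM2l => //; exact: trans_ge0. Qed.

Lemma stepE (s t : strategy H) : step s t = aff (trans s t) (fun _ => 0).
Proof. by apply: funext => f; apply: funext => x; rewrite /aff add0r. Qed.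

Lemma pre_payoff (s t : strategy H) :
  lef payoff (aff (trans s t) (fun _ => 0) payoff).
Proof.
move=> z; rewrite /aff add0r.
case E: (kind z).
- by rewrite {1}/payoff E; apply: sumP_ge0; exact: payoff_ge0.
- by rewrite {1}/payoff E; apply: sumP_ge0; exact: payoff_ge0.
- by rewrite {1}/payoff E; apply: sumP_ge0; exact: payoff_ge0.
- by rewrite trans_sumE E.
Qed.

Lemma one_payoff : lef payoff (fun _ : V => 1).
Proof. move=> z; exact: payoff_le1. Qed.

Lemma one_pre (s t : strategy H) : lef (aff (trans s t) (fun _ => 0) (fun _ => 1)) (fun _ => 1).
Proof. by move=> z; rewrite /aff add0r; under eq_bigr do rewrite mulr1; rewrite trans_sum1. Qed.

Lemma value_L (s t : strategy H) x :
  value s t x = L (trans s t) (fun _ => 0) payoff x.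
Proof. by rewrite /value /nstep_value stepE. Qed.

Lemma value_fix (s t : strategy H) x :
  \sum_y trans s t x y * value s t y = value s t x.
Proof.
have := L_fix (@trans_ge0 s t) (pre_payoff s t) one_payoff (one_pre s t) x.
rewrite /aff add0r => E.
rewrite value_L -E; apply: eq_bigr => y _; by rewrite value_L.
Qed.

Lemma value_lpp (s t : strategy H) (f : V -> R) :
  lef payoff f -> (forall x, \sum_y trans s t x y * f y <= f x) ->
  forall x, value s t x <= f x.
Proof.
move=> pf ff x; rewrite value_L.
apply: (L_le (@trans_ge0 s t) (pre_payoff s t) one_payoff (one_pre s t) pf).
by move=> z; rewrite /aff add0r.
Qed.

Lemma value_gep (s t : strategy H) x : payoff x <= value s t x.
Proof.
rewrite value_L.
exact: (L_gep (@trans_ge0 s t) (pre_payoff s t) one_payoff (one_pre s t)).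
Qed.

Lemma value_ge0 (s t : strategy H) x : 0 <= value s t x.
Proof. exact: le_trans (payoff_ge0 x) (value_gep s t x). Qed.

Lemma value_le1 (s t : strategy H) x : value s t x <= 1.
Proof.
apply: (value_lpp one_payoff) => z.
by under eq_bigr do rewrite mulr1; rewrite trans_sum1.
Qed.

Lemma value_kind (s t : strategy H) x : value s t x = match kind x with
    | Max => value s t (s x) | Min => value s t (t x)
    | Rand => \sum_y prob x y * value s t y | Sink => value s t x end.
Proof. by rewrite -{1}value_fix trans_sumE. Qed.

Lemma value_Max (s t : strategy H) x : kind x = Max -> value s t x = value s t (s x).
Proof. by move=> E; rewrite value_kind E. Qed.
Lemma value_Min (s t : strategy H) x : kind x = Min -> value s t x = value s t (t x).
Proof. by move=> E; rewrite value_kind E. Qed.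
Lemma value_Rand (s t : strategy H) x : kind x = Rand ->
  value s t x = \sum_y prob x y * value s t y.
Proof. by move=> E; rewrite value_kind E. Qed.
Lemma value_Sink (s t : strategy H) x : kind x = Sink -> value s t x = sinkval x.
Proof.
move=> E; apply/eqP; rewrite eq_le; apply/andP; split; last first.
  by have := value_gep s t x; rewrite /payoff E.
pose f1 := fun z : V => if kind z is Sink then sinkval z else 1.
have f1le z : f1 z <= 1.
  by rewrite /f1; case E': (kind z) => //; case/andP: (Hsink E').
suff : value s t x <= f1 x by rewrite /f1 E.
apply: value_lpp.
  by move=> z; rewrite /payoff /f1; case: (kind z).
move=> z; rewrite trans_sumE; case E': (kind z); rewrite {2}/f1 E' //; try exact: f1le; try by rewrite /f1 E'.
apply: le_trans (_ : \sum_y prob z y * 1 <= 1).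
  apply: ler_sum => y _; apply: ler_wpM2l => //; exact: (Hrand E').1.
by under eq_bigr do rewrite mulr1; rewrite (Hrand E').2.
Qed.


Lemma valid_min0 : exists t : strategy H, valid_min t.
Proof.
exists [ffun a => odflt a [pick y | garc a y]].
apply/forallP => a; case E: (kind a) => //; rewrite ffunE.
case: pickP => [y //|none].
by have [y ay] := Hmin E; have := none y; rewrite ay.
Qed.

Lemma BR (s : strategy H) : exists t, best_response s t.
Proof.
have [t0 vt0] := valid_min0.
pose F := fun t : strategy H => \sum_z value s t z.
case: (@arg_minP _ _ _ t0 (fun t => valid_min t) F vt0) => t vt tmin.
exists t; rewrite /best_response vt /=.
apply/forallP => t2; apply/implyP => vt2; apply/forallP => z.
rewrite leNgt; apply/negP => lt.
pose tm : strategy H :=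
  [ffun a => if value s t2 a < value s t a then t2 a else t a].
have vtm : valid_min tm.
  apply/forallP => a; move: (forallP vt a) (forallP vt2 a).
  by rewrite ffunE; case: (kind a) => //; case: ifP.
pose f := fun a => Num.min (value s t a) (value s t2 a).
have hm : forall a, value s tm a <= f a.
  apply: value_lpp.
    by move=> a; rewrite le_min !value_gep.
  move=> a; rewrite trans_sumE; case E: (kind a).
  - by rewrite /f (value_Max s t E) (value_Max s t2 E).
  - rewrite ffunE; case: ifP => c.
    + by rewrite /f (min_r (ltW c)) (value_Min s t2 E) ge_min lexx orbT.
    + have c' : value s t a <= value s t2 a by rewrite leNgt c.
      by rewrite /f (min_l c') (value_Min s t E) ge_min lexx.
  - rewrite /f le_min (value_Rand s t E) (value_Rand s t2 E).
    by apply/andP; split; apply: ler_sum => y _; apply: ler_wpM2l;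
      try exact: (Hrand E).1; rewrite ge_min lexx ?orbT.
  - exact: lexx.
have := tmin tm vtm; rewrite leNgt => /negP; apply.
rewrite /F (bigD1 z) //= [X in _ < X](bigD1 z) //=.
apply: ltr_leD.
  by apply: le_lt_trans (hm z) _; rewrite /f gt_min lt orbT.
apply: ler_sum => a _; apply: le_trans (hm a) _; by rewrite /f ge_min lexx.
Qed.

Lemma vsig_val (s : strategy H) :
  exists t, best_response s t /\ forall x, vsig s x = value s t x.
Proof.
have [t0 bt0] := BR s.
rewrite /vsig; case: pickP => [t bt | none]; first by exists t.
by have := none t0; rewrite bt0.
Qed.

Lemma br_valid (s t : strategy H) : best_response s t -> valid_min t.
Proof. by case/andP. Qed.

Lemma br_le (s t t2 : strategy H) : best_response s t -> valid_min t2 ->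
  forall x, value s t x <= value s t2 x.
Proof.
move=> /andP[_ /forallP h] v2 x; move: (h t2); rewrite v2 /= => /forallP; exact.
Qed.

Lemma u_lpp (s : strategy H) (f : V -> R) : lef payoff f ->
  (forall x, kind x = Max -> f (s x) <= f x) ->
  (forall x, kind x = Min -> exists2 y, garc x y & f y <= f x) ->
  (forall x, kind x = Rand -> \sum_y prob x y * f y <= f x) ->
  forall x, vsig s x <= f x.
Proof.
move=> pf fmax fmin frand x.
have [t [bt ->]] := vsig_val s.
pose tf : strategy H :=
  [ffun a => if [pick y | garc a y && (f y <= f a)] is Some y then y else a].
have vtf : valid_min tf.
  apply/forallP => a; case E: (kind a) => //; rewrite ffunE.
  case: pickP => [y /andP[] //|none].
  by have [y ay fy] := fmin a E; have := none y; rewrite ay fy.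
apply: le_trans (br_le bt vtf x) _.
apply: value_lpp => // a; rewrite trans_sumE; case E: (kind a).
- exact: fmax.
- rewrite ffunE; case: pickP => [y /andP[] //|_]; exact: lexx.
- exact: frand.
- exact: lexx.
Qed.

Lemma u_Max (s : strategy H) x : kind x = Max -> vsig s x = vsig s (s x).
Proof. by move=> Ex; have [t [_ E]] := vsig_val s; rewrite !E; exact: value_Max. Qed.

Lemma u_Rand (s : strategy H) x : kind x = Rand ->
  vsig s x = \sum_y prob x y * vsig s y.
Proof.
move=> Ex; have [t [_ E]] := vsig_val s; rewrite E (value_Rand _ _ Ex).
by apply: eq_bigr => y _; rewrite E.
Qed.

Lemma u_Sink (s : strategy H) x : kind x = Sink -> vsig s x = sinkval x.
Proof. by move=> Ex; have [t [_ E]] := vsig_val s; rewrite E; exact: value_Sink. Qed.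

Lemma u_gep (s : strategy H) x : payoff x <= vsig s x.
Proof. by have [t [_ E]] := vsig_val s; rewrite E; exact: value_gep. Qed.

Lemma u_ge0 (s : strategy H) x : 0 <= vsig s x.
Proof. by have [t [_ E]] := vsig_val s; rewrite E; exact: value_ge0. Qed.

Lemma u_le1 (s : strategy H) x : vsig s x <= 1.
Proof. by have [t [_ E]] := vsig_val s; rewrite E; exact: value_le1. Qed.

Lemma u_Min_ex (s : strategy H) x : kind x = Min ->
  exists2 y, garc x y & vsig s y <= vsig s x.
Proof.
move=> Ex; have [t [bt E]] := vsig_val s; exists (t x).
  by move: (forallP (br_valid bt) x); rewrite Ex.
by rewrite !E (value_Min _ _ Ex).
Qed.

Lemma u_Min_le (s : strategy H) x y : kind x = Min -> garc x y ->
  vsig s x <= vsig s y.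
Proof.
move=> Ex xy.
pose f := fun a => if a == x then Num.min (vsig s x) (vsig s y) else vsig s a.
have fu a : f a <= vsig s a.
  by rewrite /f; case: eqP => [->|_]; rewrite ?ge_min lexx.
have fx : f x = Num.min (vsig s x) (vsig s y) by rewrite /f eqxx.
have fa a : a != x -> f a = vsig s a by move=> ax; rewrite /f (negbTE ax).
have nx a : kind a <> Min -> a != x by move=> Ea; apply/eqP => ax; rewrite ax in Ea.
suff : vsig s x <= f x by rewrite fx le_min => /andP[].
apply: u_lpp.
- move=> a; rewrite /f; case: eqP => [->|_]; last exact: u_gep.
  by rewrite le_min /payoff Ex !u_ge0.
- move=> a Ea; have ax : a != x by apply: nx; rewrite Ea.
  apply: le_trans (fu (s a)) _; rewrite (fa a ax) -(u_Max s Ea); exact: lexx.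
- move=> a Ea; case: (eqVneq a x) => [->|ax].
    rewrite fx; case: (leP (vsig s y) (vsig s x)) => c.
      by exists y => //; apply: le_trans (fu y) _; rewrite ?le_min ?c ?lexx.
    have [y' xy' uy'] := u_Min_ex s Ex; exists y' => //.
    by apply: le_trans (fu y') _; rewrite ?le_min uy' ?ltW.
  have [y' ay' uy'] := u_Min_ex s Ea; exists y' => //.
  by rewrite (fa a ax); exact: le_trans (fu y') uy'.
- move=> a Ea; have ax : a != x by apply: nx; rewrite Ea.
  rewrite (fa a ax) (u_Rand s Ea); apply: ler_sum => b _.
  by apply: ler_wpM2l; [exact: (Hrand Ea).1|exact: fu].
Qed.


Lemma BC (s : strategy H) : valid_max s -> optimal s ->
  forall x y, kind x = Max -> garc x y -> vsig s y <= vsig s x.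
Proof.
move=> vs opt x y Ex xy.
case: (eqVneq y x) => [->|yx]; first exact: lexx.
rewrite leNgt; apply/negP => lt.
pose s2 : strategy H := [ffun a => if a == x then y else s a].
have vs2 : valid_max s2.
  apply/forallP => a; rewrite ffunE; case: eqP => [->|_]; first by rewrite Ex.
  exact: (forallP vs a).
have [t [bt wE]] := vsig_val s2.
have hopt : value s2 t x <= vsig s x by rewrite -wE; exact: opt.
pose Mx := fun a c => if c == x then 0 else trans s2 t a c.
pose e := fun a => trans s2 t a x.
have Mx0 : forall a c, 0 <= Mx a c.
  by move=> a c; rewrite /Mx; case: eqP => _; [exact: lexx|exact: trans_ge0].
have e0 : forall a, 0 <= e a by move=> a; exact: trans_ge0.
have splitP : forall a (g : V -> R) c, c * e a + \sum_c' Mx a c' * g c' =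
    \sum_c' trans s2 t a c' * (if c' == x then c else g c').
  move=> a g c; rewrite [RHS](bigD1 x) //= eqxx.
  rewrite [X in c * e a + X](bigD1 x) //= /Mx eqxx mul0r add0r /e [c * _]mulrC.
  by congr (_ + _); apply: eq_bigr => c' /negbTE ->.
pose Fb := fun c a => c * e a.
have nx a : kind a <> Max -> (a == x) = false.
  by move=> Ea; apply/eqP => ax; rewrite ax in Ea.
have ppc : forall c, 0 <= c -> lef payoff (aff Mx (Fb c) payoff).
  move=> c c0 a; rewrite /aff /Fb splitP; case E: (kind a).
  - rewrite {1}/payoff E; apply: sumP_ge0 => c'.
    by case: eqP => // _; exact: payoff_ge0.
  - rewrite {1}/payoff E; apply: sumP_ge0 => c'.
    by case: eqP => // _; exact: payoff_ge0.
  - rewrite {1}/payoff E; apply: sumP_ge0 => c'.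
    by case: eqP => // _; exact: payoff_ge0.
  - by rewrite trans_sumE E nx ?E.
have bnd : forall c, c <= 1 -> lef (aff Mx (Fb c) (fun _ => 1)) (fun _ => 1).
  move=> c c1 a; rewrite /aff /Fb splitP.
  apply: le_trans (_ : \sum_c' trans s2 t a c' * 1 <= 1).
    by apply: sumP_le => c'; case: eqP.
  by under eq_bigr do rewrite mulr1; rewrite trans_sum1.
pose gc := fun c => L Mx (Fb c) payoff.
have gc_fix : forall c, 0 <= c <= 1 -> forall a,
    gc c a = \sum_c' trans s2 t a c' * (if c' == x then c else gc c c').
  move=> c /andP[c0 c1] a.
  by rewrite /gc -{1}(L_fix Mx0 (ppc c c0) one_payoff (bnd c c1) a) /aff /Fb splitP.
have gc_le : forall c, 0 <= c <= 1 -> forall g, lef payoff g ->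
    lef (aff Mx (Fb c) g) g -> lef (gc c) g.
  move=> c /andP[c0 c1] g pg gg.
  exact: (L_le Mx0 (ppc c c0) one_payoff (bnd c c1) pg gg).
have gc_ge : forall c, 0 <= c <= 1 -> lef payoff (gc c).
  move=> c /andP[c0 c1].
  exact: (L_gep Mx0 (ppc c c0) one_payoff (bnd c c1)).
pose hh := L Mx e (fun _ => 0).
have pph : lef (fun _ => 0) (aff Mx e (fun _ => 0)).
  by move=> a; rewrite /aff big1 ?addr0 // => c' _; rewrite mulr0.
have z1 : lef (fun _ : V => 0 : R) (fun _ => 1) by move=> a /=; exact: ler01.
have bndh : lef (aff Mx e (fun _ => 1)) (fun _ => 1).
  move=> a; rewrite /aff -[e a]mul1r splitP.
  by under eq_bigr do rewrite if_same mulr1; rewrite trans_sum1.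
have decomp : forall c n a, iter n (aff Mx (Fb c)) payoff a =
    iter n (aff Mx (Fb 0)) payoff a + c * iter n (aff Mx e) (fun _ => 0) a.
  move=> c; elim=> [|n IH] a /=; first by rewrite mulr0 addr0.
  rewrite /aff /Fb; under eq_bigr => c' _ do rewrite IH mulrDr.
  rewrite big_split /=.
  have -> : \sum_c' Mx a c' * (c * iter n (aff Mx e) (fun _ => 0) c') =
      c * \sum_c' Mx a c' * iter n (aff Mx e) (fun _ => 0) c'.
    by rewrite mulr_sumr; apply: eq_bigr => c' _; rewrite mulrCA.
  ring.
have gc_aff : forall c, 0 <= c <= 1 -> forall a, gc c a = gc 0 a + c * hh a.
  move=> c cb a; rewrite /gc /hh /L.
  have -> : (fun n => sq Mx (Fb c) payoff n a) =
      (fun n => sq Mx (Fb 0) payoff n a + c * sq Mx e (fun _ => 0) n a).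
    by apply: funext => n; exact: decomp.
  apply: (cvg_lim (@Rhausdorff R)); apply: cvgD.
    exact: (sq_cvg Mx0 (ppc 0 (lexx 0)) one_payoff (bnd 0 ler01)).
  by apply: cvgMl_tmp; exact: (sq_cvg Mx0 pph z1 bndh).
have m0 : 0 <= vsig s x <= 1 by rewrite u_ge0 u_le1.
have W0 : 0 <= value s2 t x <= 1 by rewrite value_ge0 value_le1.
have uy : vsig s y <= gc (vsig s x) y.
  have fix_m := gc_fix _ m0.
  pose f := fun a => if a == x then vsig s x else Num.min (vsig s a) (gc (vsig s x) a).
  pose gt := fun a => if a == x then vsig s x else gc (vsig s x) a.
  have fle_u : forall a, f a <= vsig s a.
    by move=> a; rewrite /f; case: eqP => [->|_]; rewrite ?ge_min lexx.
  have fle_g : forall a, f a <= gt a.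
    by move=> a; rewrite /f /gt; case: eqP => _; rewrite ?ge_min lexx ?orbT.
  suff : vsig s y <= f y by rewrite /f (negbTE yx) le_min => /andP[].
  apply: u_lpp.
  - move=> a; rewrite /f; case: eqP => [->|_].
      by rewrite /payoff Ex u_ge0.
    by rewrite le_min u_gep (gc_ge _ m0).
  - move=> a Ea; case: (eqVneq a x) => [->|ax].
      rewrite {2}/f eqxx; apply: le_trans (fle_u _) _.
      rewrite -(u_Max s Ex); exact: lexx.
    rewrite {2}/f (negbTE ax) le_min; apply/andP; split.
      by apply: le_trans (fle_u _) _; rewrite (u_Max s Ea); exact: lexx.
    rewrite (fix_m a) trans_sumE Ea /= ffunE (negbTE ax).
    exact: fle_g.
  - move=> a Ea; rewrite {2}/f nx ?Ea //.
    case: (leP (vsig s a) (gc (vsig s x) a)) => c.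
      have [y' ay' uy'] := u_Min_ex s Ea; exists y' => //.
      exact: le_trans (fle_u _) uy'.
    exists (t a); first by move: (forallP (br_valid bt) a); rewrite Ea.
    rewrite (fix_m a) trans_sumE Ea /=; exact: fle_g.
  - move=> a Ea; rewrite {2}/f nx ?Ea // le_min; apply/andP; split.
      rewrite (u_Rand s Ea); apply: ler_sum => b _.
      by apply: ler_wpM2l; [exact: (Hrand Ea).1|exact: fle_u].
    rewrite (fix_m a) trans_sumE Ea; apply: ler_sum => b _.
    by apply: ler_wpM2l; [exact: (Hrand Ea).1|exact: fle_g].
have wy : gc (value s2 t x) y <= value s2 t x.
  have gg : lef (aff Mx (Fb (value s2 t x)) (value s2 t)) (value s2 t).
    move=> a; rewrite /aff /Fb splitP -[X in _ <= X]value_fix.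
    by apply: sumP_le => c'; case: eqP => [->|_]; exact: lexx.
  apply: le_trans (gc_le _ W0 _ (value_gep s2 t) gg y) _.
  by rewrite (value_Max s2 t Ex) ffunE eqxx; exact: lexx.
have c1 : (0:R) <= (1:R) <= (1:R) by apply/andP; split; [exact: ler01|exact: lexx].
have oy : gc 1 y <= 1 by exact: (gc_le 1 c1 _ one_payoff (bnd 1 (lexx 1)) y).
have k0 : 0 <= gc 0 y.
  by apply: le_trans (payoff_ge0 y) (gc_ge 0 _ y); rewrite lexx ler01.
have h0 : 0 <= hh y by exact: (L_gep Mx0 pph z1 bndh y).
rewrite (gc_aff _ m0) in uy; rewrite (gc_aff _ W0) in wy.
rewrite (gc_aff 1 c1) in oy.
move: m0 W0 => /andP[m0 m1] /andP[W0 W1].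
exact: (final_ineq k0 h0 uy wy oy m0 W0 hopt lt).
Qed.

End GameTh.

Section Tr.
Variables (R : realType) (G : ssg R) (A : {set vert G * vert G}) (sig : strategy G).
Hypothesis HgG : good G.
Hypothesis HA : forall x y, (x, y) \in A -> garc x y /\ kind x <> Sink.
Local Notation V := (vert G).
Local Notation T := (transform A sig).
Local Notation S := {e : V * V | e \in A}.

Lemma sumS (F : S -> R) :
  \sum_(e : S) F e = \sum_(p : V * V) (if insub p is Some e then F e else 0).
Proof.
rewrite [RHS](bigID (fun p => p \in A)) /= [X in _ = _ + X]big1 ?addr0; last first.
  by move=> p pA; rewrite insubN.
rewrite (reindex_omap (val : S -> V * V) insub); last first.
  by move=> p pA; rewrite insubT.
apply: eq_big => [e|e _]; first rewrite (valP e) /=; case: insubP => [e' _ ve|nP].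
- by rewrite (val_inj ve) eqxx.
- by rewrite (valP e) in nP.
- by rewrite (val_inj ve).
- by rewrite (valP e) in nP.
Qed.

Lemma tsum (x : V) (phi : vert T -> R) :
  \sum_(t : vert T) prob (inl x : vert T) t * phi t =
  \sum_y prob x y * (if insub (x, y) is Some e then phi (inr e) else phi (inl y)).
Proof.
rewrite big_sumType /= sumS.
pose Q a b := if insub (a, b) is Some e then
   tprob (inl x : tvert A) (inr e) * phi (inr e) else 0.
rewrite (eq_bigr (fun p => Q p.1 p.2)); last by case.
rewrite -pair_bigA /= [X in _ + X](bigD1 x) //= [X in _ + (_ + X)]big1 ?addr0; last first.
  move=> a ax; apply: big1 => b _; rewrite /Q.
  case: insubP => [e _ ve|_] //=.
  have ve' : sval e = (a, b) := ve.
  by rewrite ve' /= (negbTE ax) mul0r.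
rewrite -big_split; apply: eq_bigr => b _ /=; rewrite /Q.
case: insubP => [e eA ve|nA] /=.
  have ve' : sval e = (x, b) := ve.
  by rewrite ve' /= eqxx eA mul0r add0r.
by rewrite (negbTE nA) addr0.
Qed.

Lemma goodT : good T.
Proof.
split.
- case=> [a|e] /= Ea; first exact: (Hsink HgG Ea).
  by rewrite u_ge0 // u_le1.
- case=> [a|e] //= Ea; split.
    case=> [b|e] /=; case: ifP => _; try exact: lexx.
      exact: ((Hrand HgG Ea).1 b).
    exact: ((Hrand HgG Ea).1 _).
  have E := tsum a (fun _ => 1).
  rewrite -(Hrand HgG Ea).2.
  transitivity (\sum_(t : vert T) prob (inl a : vert T) t * 1).
    by apply: eq_bigr => t _; rewrite mulr1.
  rewrite E; apply: eq_bigr => y _; by case: insub => [?|]; rewrite mulr1.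
- case=> [a|e] //= Ea; have [y ay] := Hmin HgG Ea.
  case yA: ((a, y) \in A).
    by exists (inr (Sub (a, y) yA)); rewrite /= eqxx.
  by exists (inl y); rewrite /= ay yA.
Qed.

Definition fT (t : vert T) : R :=
  match t with inl x => vsig sig x | inr e => vsig sig (sval e).2 end.

Lemma fT_pay : lef (@payoff R T) fT.
Proof. by case=> [a|e] /=; [exact: (u_gep HgG sig a)|exact: lexx]. Qed.

Lemma fT_min : forall t : vert T, kind t = Min -> exists2 t', garc t t' & fT t' <= fT t.
Proof.
case=> [a|e] //= Ea; have [y ay uy] := u_Min_ex HgG sig Ea.
case yA: ((a, y) \in A).
  by exists (inr (Sub (a, y) yA)); rewrite /= ?eqxx.
by exists (inl y); rewrite /= ?ay ?yA.
Qed.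

Lemma fT_rand : forall t : vert T, kind t = Rand ->
  \sum_t' prob t t' * fT t' <= fT t.
Proof.
case=> [a|e] //= Ea; rewrite tsum (u_Rand HgG sig Ea).
apply: ler_sum => y _; case: insubP => [e _ ve|_] /=; last exact: lexx.
have ve' : sval e = (a, y) := ve.
by rewrite ve'; exact: lexx.
Qed.

Definition rho0 : strategy T := lift_strategy A sig sig.

Lemma fT_max_rho0 : forall t : vert T, kind t = Max -> fT (rho0 t) <= fT t.
Proof.
case=> [a|e] //= Ea; rewrite /rho0 /lift_strategy ffunE.
case: insubP => [e _ ve|_] /=.
  have ve' : sval e = (a, sig a) := ve.
  by rewrite ve' /= -(u_Max HgG sig Ea); exact: lexx.
by rewrite -(u_Max HgG sig Ea); exact: lexx.
Qed.

Lemma uT_le : forall t, vsig rho0 t <= fT t.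
Proof. exact: (u_lpp goodT fT_pay fT_max_rho0 fT_min fT_rand). Qed.


Lemma uT_ge : forall a, vsig sig a <= vsig rho0 (inl a).
Proof.
move=> a0.
pose h := fun a : V => Num.min (vsig sig a) (vsig rho0 (inl a)).
suff : vsig sig a0 <= h a0 by rewrite le_min => /andP[].
apply: (u_lpp HgG (s:=sig)).
- move=> a; rewrite le_min; apply/andP; split; first exact: (u_gep HgG sig a).
  exact: (u_gep goodT rho0 (inl a)).
- move=> a Ea; have EM := u_Max goodT rho0 (x:=inl a) Ea.
  move: EM; rewrite /rho0 /lift_strategy ffunE.
  case: insubP => [e _ ve|_] /= EM.
    have ve' : sval e = (a, sig a) := ve.
    have Ee : vsig (lift_strategy A sig sig) (inr e) = vsig sig (sig a).
      by rewrite (u_Sink goodT _ (x:=inr e) erefl) /= ve'.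
    rewrite /h EM Ee -(u_Max HgG sig Ea) minxx ge_min lexx //.
  by rewrite /h EM (u_Max HgG sig Ea); exact: lexx.
- move=> a Ea; case: (leP (vsig sig a) (vsig rho0 (inl a))) => c.
    have ha : h a = vsig sig a by rewrite /h; apply: min_l.
    have [y' ay' uy'] := u_Min_ex HgG sig Ea; exists y' => //.
    by rewrite ha; apply: le_trans uy'; rewrite /h ge_min lexx.
  have ha : h a = vsig rho0 (inl a) by rewrite /h; apply: min_r; exact: ltW.
  have [t' at' ut'] := u_Min_ex goodT rho0 (x:=inl a) Ea.
  rewrite ha; case: t' at' ut' => [b|e] /= at' ut'.
    case/andP: at' => ab _; exists b => //.
    by apply: le_trans ut'; rewrite /h ge_min lexx orbT.
  case: e at' ut' => [[a' b] eA] /= /eqP ea ut'; subst a'.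
  exists b; first exact: (HA eA).1.
  apply: le_trans ut'; rewrite (u_Sink goodT _ (x:=inr (exist _ (a, b) eA)) erefl) /=.
  by rewrite /h ge_min lexx.
- move=> a Ea; rewrite le_min; apply/andP; split.
    rewrite (u_Rand HgG sig Ea); apply: ler_sum => y _.
    by apply: ler_wpM2l; [exact: (Hrand HgG Ea).1|rewrite /h ge_min lexx].
  rewrite (u_Rand goodT rho0 (x:=inl a) Ea) tsum; apply: ler_sum => y _.
  apply: ler_wpM2l; first exact: (Hrand HgG Ea).1.
  case: insubP => [e _ ve|_] /=.
    have ve' : sval e = (a, y) := ve.
    by rewrite (u_Sink goodT _ (x:=inr e) erefl) /= ve' /= /h ge_min lexx.
  by rewrite /h ge_min lexx orbT.
Qed.

Lemma uT_eq : forall t, vsig rho0 t = fT t.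
Proof.
case=> [a|e].
  by apply/eqP; rewrite eq_le uT_le uT_ge.
exact: (u_Sink goodT rho0 (x:=inr e) erefl).
Qed.

Lemma lpp_T (rho : strategy T) : valid_max rho ->
  (forall x y, kind x = Max -> garc x y -> vsig sig y <= vsig sig x) ->
  forall t, vsig rho t <= fT t.
Proof.
move=> vr bc; apply: (u_lpp goodT fT_pay _ fT_min fT_rand).
case=> [a|e] //= Ea; have := forallP vr (inl a); rewrite /= Ea.
case: (rho (inl a)) => [b|e] /=.
  by case/andP => ab _; exact: bc.
case: e => [[a' b] eA] /= /eqP ea; subst a'.
exact: bc Ea (HA eA).1.
Qed.

Lemma rho0_valid : valid_max sig -> valid_max rho0.
Proof.
move=> vs; apply/forallP; case=> [a|e] //=.
case Ea: (kind a) => //; rewrite /rho0 /lift_strategy ffunE.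
case: insubP => [e _ ve|nA] /=.
  have ve' : sval e = (a, sig a) := ve.
  by rewrite ve' eqxx.
by rewrite (negbTE nA) andbT; move: (forallP vs a); rewrite Ea.
Qed.

End Tr.

Local Close Scope classical_set_scope.

Theorem lemma14 (R : realType) (G : ssg R) (A : {set vert G * vert G})
  (sigma : strategy G) :
  ssg_wf G -> ssg_rational G ->
  (forall x y : vert G, (x, y) \in A -> garc x y /\ kind x <> Sink) ->
  valid_max sigma ->
  optimal sigma <-> optimal (lift_strategy A sigma sigma).
Proof.
move=> [Hs Hnarc Hsinkarc Hr Hsv] _ HA vs.
have HgG : good G.
  split => //.
  - move=> x Ex; have [Hpos [Hzero Hsum]] := Hr x Ex; split => // y.
    case: (boolP (garc x y)) => xy; first exact: ltW (Hpos y xy).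
    by rewrite Hzero.
  - by move=> x Ex; apply: Hnarc; rewrite Ex.
split => opt.
- move=> rho vr t; rewrite (uT_eq HgG HA t).
  apply: (lpp_T HgG HA vr); exact: (BC HgG vs opt).
- move=> s2 vs2 x; apply: (u_lpp HgG (s:=s2) (f:=vsig sigma)).
  + exact: (u_gep HgG sigma).
  + move=> a Ea; have arc : garc a (s2 a) by move: (forallP vs2 a); rewrite Ea.
    have bcT := BC (goodT A sigma HgG) (rho0_valid A vs) opt (x:=inl a) Ea.
    case yA: ((a, s2 a) \in A).
      have := bcT (inr (Sub (a, s2 a) yA)); rewrite /= eqxx => /(_ isT).
      by rewrite !(uT_eq HgG HA).
    have := bcT (inl (s2 a)); rewrite /= arc yA => /(_ isT).
    by rewrite !(uT_eq HgG HA).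
  + exact: (u_Min_ex HgG sigma).
  + by move=> a Ea; rewrite (u_Rand HgG sigma Ea); exact: lexx.
Qed.
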